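(* Let $\Phi:\ell^\infty(\mathbb Z)\to\ell^\infty(\mathbb Z)$ be a linear map commuting with the backward shift $B$, $(Bv)_n=v_{n+1}$. If $\Phi$ is weak*-continuous and idempotent ($\Phi\circ\Phi=\Phi$), then $\Phi$ is either the identity map or $0$.
   Context: The weak*-topology on $\ell^\infty(\mathbb Z)$ is the one coming from $\ell^\infty(\mathbb Z)=\ell^1(\mathbb Z)^*$. *)

(* Defs.v *)
From HB Require Import structures.
From mathcomp Require Import all_boot all_order all_algebra.
From mathcomp Require Import all_classical all_reals all_analysis.
Set Implicit Arguments. Unset Strict Implicit. Unset Printing Implicit Defensive.
Import Order.TTheory GRing.Theory Num.Theory.
Import numFieldNormedType.Exports.
Local Open Scope ring_scope.
Local Open Scope classical_set_scope.

Definition linf (R : realType) (v : int -> R) : Prop :=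
  exists M : R, forall n : int, `|v n| <= M.

Definition l1 (R : realType) (a : int -> R) : Prop :=
  exists M : R, forall N : nat,
    \sum_(k < N) (`|a (k%:Z)| + `|a (- (k.+1)%:Z)|) <= M.

(* Partial sums over -N <= n < N (indices k and -(k+1)) of v_n a_n. *)
Definition pair_partial (R : realType) (v a : int -> R) (N : nat) : R :=
  \sum_(k < N) (v (k%:Z) * a (k%:Z) + v (- (k.+1)%:Z) * a (- (k.+1)%:Z)).

(* Duality pairing <v, a> = sum_{n in Z} v_n a_n (absolutely convergent when
   v in l^infty and a in l^1). *)
Definition dpair (R : realType) (v a : int -> R) : R :=
  limn (pair_partial v a).

(* Weak*-open subsets of l^infty(Z) = l^1(Z)^*: U is contained in l^infty and
   every point of U has a basic weak*-neighbourhood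
   { w | |<w - v, a_i>| < e, i < k } (a_i in l^1, e > 0) contained in U. *)
Definition wstar_open (R : realType) (U : set (int -> R)) : Prop :=
  U `<=` linf (R:=R) /\
  forall v, U v ->
    exists (k : nat) (A : 'I_k -> (int -> R)) (e : R),
      0 < e /\ (forall i, l1 (A i)) /\
      forall w, linf w ->
        (forall i, `|dpair (fun n => w n - v n) (A i)| < e) -> U w.

(* Phi : l^infty -> l^infty (given as a function defined on all sequences,
   only its values on l^infty matter) is weak*-continuous: preimages (in
   l^infty) of weak*-open sets are weak*-open. *)
Definition wstar_continuous (R : realType) (Phi : (int -> R) -> (int -> R))
  : Prop :=
  forall U, wstar_open U -> wstar_open (fun v => linf v /\ U (Phi v)).

Definition bshift (R : realType) (v : int -> R) : int -> R :=
  fun n => v (n + 1).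

(* Main.v *)
From Pilot Require Import Defs.
From mathcomp Require Import all_boot all_order all_algebra.
From mathcomp Require Import all_classical all_reals all_analysis.
From mathcomp Require Import ring lra zify.
Set Implicit Arguments. Unset Strict Implicit. Unset Printing Implicit Defensive.
Import Order.TTheory GRing.Theory Num.Theory.
Import numFieldNormedType.Exports.
Local Open Scope ring_scope.
Local Open Scope classical_set_scope.


Definition Gt (R : realType) (g : int -> R) (k : nat) : R :=
  `|g (k%:Z)| + `|g (- (k.+1)%:Z)|.

Lemma Gt_ge0 (R : realType) (g : int -> R) k : 0 <= Gt g k.
Proof. by rewrite /Gt addr_ge0. Qed.

Lemma l1_bound (R : realType) (g : int -> R) : l1 g ->
  exists L, 0 <= L /\ forall N, \sum_(0 <= k < N) Gt g k <= L.
Proof.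
move=> [L HL]; exists L; split.
  by have := HL 0%N; rewrite big_ord0.
by move=> N; rewrite big_mkord; exact: HL.
Qed.

Lemma l1_tail (R : realType) (g : int -> R) : l1 g ->
  forall e, 0 < e -> exists K : nat, forall N, (K <= N)%N ->
    \sum_(K <= k < N) Gt g k <= e.
Proof.
move=> /l1_bound [L [L0 HL]] e e0.
set E := range (fun N => \sum_(0 <= k < N) Gt g k).
have hs : has_sup E.
  split; first by exists (\sum_(0 <= k < 0) Gt g k); exists 0%N.
  by exists L => _ [N _ <-]; exact: HL.
have [_ [K _ <-] HK] := sup_adherent e0 hs.
exists K => N KN.
have : \sum_(0 <= k < N) Gt g k <= sup E.
  by apply: sup_upper_bound => //; exists N.
rewrite (big_cat_nat (n:=K)) //=.
move: HK; set a := \sum_(0 <= k < K) _; set b := \sum_(K <= k < N) _.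
move=> H1 H2. lra.
Qed.


Notation dpr := Pilot.Defs.dpair.

Definition ptm (R : realType) (x a : int -> R) (k : nat) : R :=
  x (k%:Z) * a (k%:Z) + x (- (k.+1)%:Z) * a (- (k.+1)%:Z).

Lemma pair_partialE (R : realType) (x a : int -> R) :
  pair_partial x a = series (ptm x a).
Proof. by apply/funext => N; rewrite /pair_partial /series /= big_mkord. Qed.

Lemma dpair_bound (R : realType) (x a : int -> R) B :
  (forall N, \sum_(0 <= k < N) `|ptm x a k| <= B) -> `|dpr x a| <= B.
Proof.
move=> HB.
have cv : cvgn (series (ptm x a)).
  apply: normed_cvg; apply: nondecreasing_is_cvgn.
    move=> m n mn; rewrite /series /=; have := (@nondecreasing_series _ (fun k => `|ptm x a k|) xpredT 0%N (fun _ _ _ => normr_ge0 _) m n mn); rewrite !big_mkcond /=; exact.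
  by exists B => _ [N _ <-]; exact: HB.
have bN : forall N, `|series (ptm x a) N| <= B.
  move=> N; apply: le_trans (HB N); rewrite /series /=; exact: ler_norm_sum.
rewrite /dpr /Defs.dpair pair_partialE ler_norml; apply/andP; split.
  apply: limr_ge => //; apply: nearW => N; have := bN N; rewrite ler_norml.
  by case/andP.
apply: limr_le => //; apply: nearW => N; have := bN N; rewrite ler_norml.
by case/andP.
Qed.

Lemma ptm_le (R : realType) (x a g : int -> R) (b : R) k :
  (forall m, `|a m| <= `|g m|) ->
  `|x k%:Z| <= b -> `|x (- (k.+1)%:Z)| <= b -> `|ptm x a k| <= b * Gt g k.
Proof.
move=> Ha h1 h2; rewrite /ptm /Gt mulrDr.
apply: le_trans (ler_normD _ _) _; rewrite !normrM.
apply: lerD; apply: ler_pM => //; exact: Ha.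
Qed.

Lemma dpair_small (R : realType) (g : int -> R) (M e : R) :
  l1 g -> 0 < e -> 0 <= M ->
  exists K : nat, exists eta : R, 0 < eta /\ forall x a,
   (forall m, `|x m| <= M) -> (forall m, `|a m| <= `|g m|) ->
   (forall k : nat, (k < K)%N -> `|x k%:Z| <= eta /\ `|x (- (k.+1)%:Z)| <= eta) ->
   `|dpr x a| < e.
Proof.
move=> g1 e0 M0.
have [L [L0 HL]] := l1_bound g1.
set t := e / (4 * (M + 1)).
have t0 : 0 < t by rewrite /t divr_gt0 // mulr_gt0 //; lra.
have [K HK] := l1_tail g1 t0.
set eta := e / (4 * (L + 1)).
have eta0 : 0 < eta by rewrite /eta divr_gt0 // mulr_gt0 //; lra.
have etaL : eta * L <= e / 4.
  have : eta * (L + 1) = e / 4 by rewrite /eta; field; lra.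
  nra.
have Mt : M * t <= e / 4.
  have : t * (M + 1) = e / 4 by rewrite /t; field; lra.
  nra.
exists K, eta; split => // x a xM ag xK.
apply: (@le_lt_trans _ _ (e / 2)); last lra.
apply: dpair_bound => N.
have GL : forall n, \sum_(0 <= k < n) Gt g k <= L := HL.
case: (leqP N K) => NK.
  apply: (@le_trans _ _ (\sum_(0 <= k < N) eta * Gt g k)).
    apply: ler_sum_nat => k /andP[_ kN]; apply: ptm_le => //;
      by have [] := xK k (leq_trans kN NK).
  rewrite -mulr_sumr; have := GL N; have := Gt_ge0 g; nra.
rewrite (big_cat_nat (n:=K)) //= ?(ltnW NK) //.
apply: (@le_trans _ _ (\sum_(0 <= k < K) eta * Gt g k + \sum_(K <= k < N) M * Gt g k)).
  apply: lerD; apply: ler_sum_nat => k /andP[k1 k2]; apply: ptm_le => //.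
  - by have [] := xK k k2.
  - by have [] := xK k k2.
rewrite -!mulr_sumr; have := GL K; have := HK N (ltnW NK).
have : 0 <= \sum_(0 <= k < K) Gt g k by apply: sumr_ge0 => *; apply: Gt_ge0.
nra.
Qed.

Definition dlt (R : realType) (n : int) : int -> R :=
  fun m => if m == n then 1 else 0.
Arguments dlt {R} n m.

Definition idx (n : int) : nat := match n with Posz p => p | Negz p => p end.

Lemma sum_single (R : realType) (F : nat -> R) k0 N :
  (forall k, k != k0 -> F k = 0) ->
  \sum_(k < N) F k = if (k0 < N)%N then F k0 else 0.
Proof.
move=> HF; elim: N => [|N IH]; first by rewrite big_ord0.
rewrite big_ord_recr /= IH.
case: (ltngtP k0 N) => h.
- have -> : (k0 < N.+1)%N by lia.
  by rewrite (HF N) ?addr0 //; apply/eqP; lia.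
- have -> : (k0 < N.+1)%N = false by lia.
  by rewrite (HF N) ?addr0 //; apply/eqP; lia.
- by rewrite h ltnSn add0r.
Qed.

Lemma ptm_dlt (R : realType) (x : int -> R) n k :
  ptm x (dlt n) k = if k == idx n then x n else 0.
Proof.
rewrite /ptm /dlt; case: n => p; rewrite [idx _]/= ?NegzE;
  repeat (case: ifP => /eqP ?); rewrite ?mulr1 ?mulr0 ?addr0 ?add0r //;
  try lia; congr x; lia.
Qed.

Lemma Gt_dlt (R : realType) n k :
  Gt (@dlt R n) k = if k == idx n then 1 else 0.
Proof.
rewrite /Gt /dlt; case: n => p; rewrite [idx _]/= ?NegzE;
  repeat (case: ifP => /eqP ?); rewrite ?normr1 ?normr0 ?addr0 ?add0r //; lia.
Qed.

Lemma l1_dlt (R : realType) n : l1 (@dlt R n).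
Proof.
exists 1 => N; rewrite -/(Gt _ _).
rewrite (eq_bigr (fun k : 'I_N => Gt (@dlt R n) k)) //.
rewrite (@sum_single R (fun k => Gt (@dlt R n) k) (idx n)).
  by case: ifP => _ /=; rewrite ?Gt_dlt ?eqxx ?ler01.
by move=> k /negbTE kn; rewrite Gt_dlt kn.
Qed.

Lemma dpair_dlt (R : realType) (x : int -> R) n : dpr x (dlt n) = x n.
Proof.
rewrite /Defs.dpair pair_partialE; apply: cvg_lim => //. apply: (@cvg_near_cst _ _ (x n) _ \oo).
near=> N; rewrite /series /= big_mkord.
rewrite (@sum_single R (ptm x (dlt n)) (idx n)).
  have -> : (idx n < N)%N by near: N; exact: nbhs_infty_gt.
  by rewrite ptm_dlt eqxx.
by move=> k /negbTE kn; rewrite ptm_dlt kn.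
Unshelve. all: by end_near.
Qed.

Lemma CC (R : realType) (Phi : (int -> R) -> (int -> R))
  (Hmaps : forall v, linf v -> linf (Phi v)) (Hcont : wstar_continuous Phi)
  v n eps : linf v -> 0 < eps ->
  exists k (A : 'I_k -> int -> R) e, 0 < e /\ (forall i, l1 (A i)) /\
    forall w, linf w -> (forall i, `|dpr (fun m => w m - v m) (A i)| < e) ->
      `|Phi w n - Phi v n| < eps.
Proof.
move=> lv e0.
pose U : set (int -> R) := fun w => linf w /\ `|w n - Phi v n| < eps.
have oU : wstar_open U.
  split; first by move=> w [].
  move=> w0 [l0 h0].
  exists 1%N, (fun _ => dlt n), (eps - `|w0 n - Phi v n|).
  split; first by rewrite subr_gt0.
  split; first by move=> _; exact: l1_dlt.
  move=> w lw /(_ ord0); rewrite dpair_dlt => h; split => //.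
  have := ler_normD (w n - w0 n) (w0 n - Phi v n).
  have -> : w n - w0 n + (w0 n - Phi v n) = w n - Phi v n by ring.
  lra.
have [_ /(_ v)] := Hcont U oU.
case.
  split => //; split; first exact: Hmaps.
  by rewrite subrr normr0.
move=> k [A [e [e0' [A1 H]]]].
exists k, A, e; split => //; split => // w lw hw.
by have [_ []] := H w lw hw.
Qed.

Lemma CC2 (R : realType) (Phi : (int -> R) -> (int -> R))
  (Hmaps : forall v, linf v -> linf (Phi v)) (Hcont : wstar_continuous Phi)
  v n eps M : linf v -> 0 < eps -> 0 <= M ->
  exists K : nat, exists eta : R, 0 < eta /\ forall w, linf w ->
    (forall m, `|w m - v m| <= M) ->
    (forall k : nat, (k < K)%N -> `|w k%:Z - v k%:Z| <= eta /\
        `|w (- (k.+1)%:Z) - v (- (k.+1)%:Z)| <= eta) ->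
    `|Phi w n - Phi v n| < eps.
Proof.
move=> lv e0 M0.
have [k [A [e [e1 [A1 H]]]]] := CC Hmaps Hcont n lv e0.
pose g := fun m => \sum_(i < k) `|A i m|.
have g0 : forall m, 0 <= g m by move=> m; apply: sumr_ge0 => *.
have gl1 : l1 g.
  have [Ms HMs] := fin_all_exists A1.
  exists (\sum_(i < k) Ms i) => N.
  rewrite (eq_bigr (fun j : 'I_N => \sum_(i < k) (`|A i j| + `|A i (- (j.+1)%:Z)|))); last first.
    by move=> j _; rewrite !ger0_norm // big_split.
  rewrite exchange_big /=; apply: ler_sum => i _; exact: HMs.
have ag : forall i m, `|A i m| <= `|g m|.
  move=> i m; rewrite (ger0_norm (g0 m)) /g (bigD1 i) //= lerDl.
  by apply: sumr_ge0.
have [K [eta [eta0 Hs]]] := dpair_small gl1 e1 M0.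
exists K, eta; split => // w lw wM wK.
apply: H => // i; apply: Hs => //.
Qed.


Definition Cs (R : realType) (t : R) : int -> R := fun n => cos (n%:~R * t).
Definition Ss (R : realType) (t : R) : int -> R := fun n => sin (n%:~R * t).
Definition fshift (R : realType) (v : int -> R) : int -> R := fun n => v (n - 1).

Lemma linf_comb (R : realType) (c : R) v w : linf v -> linf w ->
  linf (fun n => c * v n + w n).
Proof.
move=> [M HM] [N HN]; exists (`|c| * M + N) => n.
apply: le_trans (ler_normD _ _) _; rewrite normrM; apply: lerD => //.
by apply: ler_wpM2l.
Qed.

Lemma linf0 (R : realType) : linf (fun _ : int => (0 : R)).
Proof. by exists 0 => n; rewrite normr0. Qed.

Lemma linf_scale (R : realType) (c : R) v : linf v -> linf (fun n => c * v n).
Proof.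
move=> lv; have := linf_comb c lv (@linf0 R).
by rewrite (_ : (fun n => c * v n + 0) = (fun n => c * v n)) //; apply/funext => n; rewrite addr0.
Qed.

Lemma linf_add (R : realType) (v w : int -> R) : linf v -> linf w -> linf (fun n => v n + w n).
Proof.
move=> lv lw; have := linf_comb 1 lv lw.
by rewrite (_ : (fun n => 1 * v n + w n) = (fun n => v n + w n)) //; apply/funext => n; rewrite mul1r.
Qed.

Lemma linf_Cs (R : realType) (t : R) : linf (Cs t).
Proof. by exists 1 => n; exact: cos_max. Qed.

Lemma linf_Ss (R : realType) (t : R) : linf (Ss t).
Proof. by exists 1 => n; exact: sin_max. Qed.

Lemma linf_bshift (R : realType) (v : int -> R) : linf v -> linf (bshift v).
Proof. by move=> [M HM]; exists M => n; exact: HM. Qed.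

Lemma linf_fshift (R : realType) (v : int -> R) : linf v -> linf (fshift v).
Proof. by move=> [M HM]; exists M => n; exact: HM. Qed.

Section Lin.
Definition islin (R : realType) (Phi : (int -> R) -> (int -> R)) :=
  forall (c : R) v w, linf v -> linf w ->
     Phi (fun n => c * v n + w n) = (fun n => c * Phi v n + Phi w n).
End Lin.

Lemma Phi0 (R : realType) Phi : @islin R Phi -> Phi (fun _ => 0) = (fun _ => 0).
Proof.
move=> Hl; have := Hl 1 _ _ (@linf0 R) (@linf0 R).
rewrite (_ : (fun n : int => 1 * 0 + 0) = (fun _ => 0 : R)); last first.
  by apply/funext => n; rewrite mulr0 addr0.
move=> E; apply/funext => n; have := congr1 (fun f => f n) E => /= h.
have : Phi (fun=> 0) n = 0 by move: h; rewrite mul1r; lra.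
done.
Qed.

Lemma PhiZ (R : realType) Phi (c : R) v : islin Phi -> linf v ->
  Phi (fun n => c * v n) = (fun n => c * Phi v n).
Proof.
move=> Hl lv; have := Hl c _ _ lv (@linf0 R).
rewrite (Phi0 Hl) (_ : (fun n : int => c * v n + 0) = (fun n => c * v n)); last first.
  by apply/funext => n; rewrite addr0.
move=> ->; apply/funext => n; by rewrite addr0.
Qed.

Lemma PhiD (R : realType) Phi (v w : int -> R) : islin Phi -> linf v -> linf w ->
  Phi (fun n => v n + w n) = (fun n => Phi v n + Phi w n).
Proof.
move=> Hl lv lw; have := Hl 1 _ _ lv lw.
rewrite (_ : (fun n : int => 1 * v n + w n) = (fun n => v n + w n)); last first.
  by apply/funext => n; rewrite mul1r.
move=> ->; apply/funext => n; by rewrite mul1r.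
Qed.

Lemma Phi_fshift (R : realType) (Phi : (int -> R) -> (int -> R))
  (Hshift : forall v, linf v -> Phi (bshift v) = bshift (Phi v)) v :
  linf v -> Phi (fshift v) = fshift (Phi v).
Proof.
move=> lv.
have e1 : v = bshift (fshift v).
  by apply/funext => n; rewrite /bshift /fshift addrK.
have := Hshift _ (linf_fshift lv); rewrite -e1 => ->.
by apply/funext => n; rewrite /bshift /fshift subrK.
Qed.

Lemma rec_zero (R : realType) (x : int -> R) (c : R) :
  (forall n, x (n + 1) + x (n - 1) = c * x n) -> x 0 = 0 -> x 1 = 0 ->
  forall n, x n = 0.
Proof.
move=> Hr x0 x1.
have pos : forall k : nat, x (k%:Z) = 0 /\ x (k%:Z + 1) = 0.
  elim=> [|k [h1 h2]]; first by split.
  have e : (k.+1)%:Z = k%:Z + 1 by lia.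
  rewrite e; split => //.
  have := Hr (k%:Z + 1); rewrite addrK h1 h2 mulr0 addr0; done.
have neg : forall k : nat, x (- k%:Z) = 0 /\ x (- k%:Z + 1) = 0.
  elim=> [|k [h1 h2]]; first by split.
  have e : - (k.+1)%:Z = - k%:Z - 1 by lia.
  rewrite e subrK; split => //.
  have := Hr (- k%:Z); rewrite h1 h2 mulr0 add0r; done.
case=> k; first by case: (pos k).
rewrite NegzE; by case: (neg k.+1).
Qed.

Lemma bshift_Cs (R : realType) (t : R) :
  bshift (Cs t) = (fun n => cos t * Cs t n + (- sin t) * Ss t n).
Proof.
apply/funext => n; rewrite /bshift /Cs /Ss intrD1 mulrDl mul1r cosD; ring.
Qed.

Lemma bshift_Ss (R : realType) (t : R) :
  bshift (Ss t) = (fun n => sin t * Cs t n + cos t * Ss t n).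
Proof.
apply/funext => n; rewrite /bshift /Cs /Ss intrD1 mulrDl mul1r sinD; ring.
Qed.

Lemma fshift_Cs (R : realType) (t : R) :
  fshift (Cs t) = (fun n => cos t * Cs t n + sin t * Ss t n).
Proof.
apply/funext => n; rewrite /fshift /Cs /Ss intrB mulrBl mul1r cosB; ring.
Qed.

Lemma Cs0 (R : realType) (t : R) : Cs t 0 = 1.
Proof. by rewrite /Cs mul0r cos0. Qed.
Lemma Ss0 (R : realType) (t : R) : Ss t 0 = 0.
Proof. by rewrite /Cs /Ss mul0r sin0. Qed.
Lemma Cs1 (R : realType) (t : R) : Cs t 1 = cos t.
Proof. by rewrite /Cs mul1r. Qed.
Lemma Ss1 (R : realType) (t : R) : Ss t 1 = sin t.
Proof. by rewrite /Ss mul1r. Qed.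

Lemma eig_trig (R : realType) (Phi : (int -> R) -> (int -> R))
  (Hmaps : forall v, linf v -> linf (Phi v))
  (Hl : islin Phi)
  (Hshift : forall v, linf v -> Phi (bshift v) = bshift (Phi v))
  (Hidem : forall v, linf v -> Phi (Phi v) = Phi v) (t : R) :
  sin t != 0 ->
  exists z : R, (z = 0 \/ z = 1) /\ Phi (Cs t) = (fun n => z * Cs t n) /\
     Phi (Ss t) = (fun n => z * Ss t n).
Proof.
move=> st.
pose w := Phi (Cs t).
have lC := linf_Cs t; have lS := linf_Ss t.
have hb : forall n, w (n + 1) = cos t * w n - sin t * Phi (Ss t) n.
  move=> n; have := Hshift _ lC; rewrite bshift_Cs (Hl _ _ _ lC (linf_scale (- sin t) lS)).
  rewrite (PhiZ _ Hl lS) => /(congr1 (fun f => f n)) /=; rewrite /bshift -/w => <-; ring.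
have PS : forall n, Phi (Ss t) n = (cos t * w n - w (n + 1)) / sin t.
  by move=> n; rewrite hb; field.
have hf : forall n, w (n - 1) = cos t * w n + sin t * Phi (Ss t) n.
  move=> n; have := Phi_fshift Hshift lC; rewrite fshift_Cs (Hl _ _ _ lC (linf_scale (sin t) lS)).
  rewrite (PhiZ _ Hl lS) => /(congr1 (fun f => f n)) /=; rewrite /fshift -/w => <-; ring.
have rec : forall n, w (n + 1) + w (n - 1) = (2 * cos t) * w n.
  by move=> n; rewrite hb hf; ring.
pose a := w 0; pose b := (w 1 - a * cos t) / sin t.
have wE : forall n, w n = a * Cs t n + b * Ss t n.
  move=> n; apply/eqP; rewrite -subr_eq0; apply/eqP; move: n.
  apply: (@rec_zero _ (fun n => w n - (a * Cs t n + b * Ss t n)) (2 * cos t)).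
  - move=> n /=.
    have -> : w (n + 1) = 2 * cos t * w n - w (n - 1) by rewrite -rec; ring.
    have e1 := congr1 (fun f => f n) (bshift_Cs t); have e2 := congr1 (fun f => f n) (bshift_Ss t).
    have e3 := congr1 (fun f => f n) (fshift_Cs t).
    rewrite /bshift /fshift /= in e1 e2 e3.
    have e4 : Ss t (n - 1) = - sin t * Cs t n + cos t * Ss t n.
      by rewrite /Ss /Cs intrB mulrBl mul1r sinB; ring.
    rewrite e1 e2 e3 e4; ring.
  - by rewrite Cs0 Ss0 /a; ring.
  - by rewrite Cs1 Ss1 /b; field.
have PSE : forall n, Phi (Ss t) n = a * Ss t n - b * Cs t n.
  move=> n; rewrite PS !wE.
  have e1 := congr1 (fun f => f n) (bshift_Cs t); have e2 := congr1 (fun f => f n) (bshift_Ss t).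
  by rewrite /bshift /= in e1 e2; rewrite e1 e2; field.
have wF : w = (fun n => a * Cs t n + b * Ss t n).
  apply/funext => k; exact: wE.
have idw : forall n, Phi w n = w n by move=> n; rewrite /w Hidem.
have PwE : forall n, Phi w n = a * w n + b * Phi (Ss t) n.
  move=> n; rewrite {1}wF (Hl _ _ _ lC (linf_scale b lS)) (PhiZ _ Hl lS) /=.
  by rewrite -/w.
have q0 := idw 0; rewrite PwE PSE !wE Cs0 Ss0 in q0.
have q1 := idw 1; rewrite PwE PSE !wE Cs1 Ss1 in q1.
have qa : a * a - b * b = a by move: q0; lra.
have qb : b * (2 * a - 1) = 0.
  have : sin t * (b * (2 * a - 1)) = 0.
    have : cos t * (a * a - b * b - a) + sin t * (2 * a * b - b) = 0 by move: q1; lra.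
    rewrite qa subrr mulr0 add0r => h; rewrite -h; ring.
  by move/eqP; rewrite mulf_eq0 (negbTE st) /= => /eqP.
have b0 : b = 0.
  move/eqP: qb; rewrite mulf_eq0 => /orP[/eqP //|/eqP h].
  have ha : a = 1 / 2 by move: h; lra.
  rewrite ha in qa; have := sqr_ge0 b; nra.
rewrite b0 in qa PSE wE.
exists a; split.
  have h : a * (a - 1) = 0.
    by rewrite mulrBr mulr1; move: qa; rewrite mul0r subr0 => ->; rewrite subrr.
  move/eqP: h; rewrite mulf_eq0 subr_eq0.
  by case/orP => /eqP h; [left|right].
split; apply/funext => n; rewrite ?PSE -?/w ?wE; ring.
Qed.


Lemma near_itv (R : realType) (a b t0 : R) : a < t0 < b ->
  \forall t \near t0, a < t < b.
Proof.
move=> /andP[h1 h2]; apply/nbhs_ballP; exists (Num.min (t0 - a) (b - t0)) => /=.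
  by rewrite lt_min !subr_gt0 h1 h2.
move=> t; rewrite /ball /= lt_min => /andP[].
rewrite !ltr_norml => /andP[c1 c2] /andP[c3 c4]; apply/andP; split; lra.
Qed.

Lemma near_cos (R : realType) (m : int) (t0 eta : R) : 0 < eta ->
  \forall t \near t0, `|cos (m%:~R * t) - cos (m%:~R * t0)| <= eta.
Proof.
move=> e0.
have hc : (fun t => cos (m%:~R * t)) @ t0 --> cos (m%:~R * t0).
  apply: (@continuous_comp _ _ _ (fun t : R => m%:~R * t) cos).
    exact: mulrl_continuous.
  exact: continuous_cos.
move/cvgrPdist_le : hc => /(_ eta e0).
apply: filterS => t; by rewrite distrC.
Qed.

Lemma near_all (R : realType) (t0 : R) (P : nat -> R -> Prop) K :
  (forall k, \forall t \near t0, P k t) ->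
  \forall t \near t0, forall k, (k < K)%N -> P k t.
Proof.
move=> H; elim: K => [|K IH].
  by near=> t => k.
near=> t => k; rewrite ltnS leq_eqVlt => /orP[/eqP->|kK].
  near: t; exact: H.
move: k kK; near: t; exact: IH.
Unshelve. all: by end_near.
Qed.

Definition zf (R : realType) (Phi : (int -> R) -> (int -> R)) (t : R) := Phi (Cs t) 0.

Lemma eig_z (R : realType) (Phi : (int -> R) -> (int -> R))
  (Hmaps : forall v, linf v -> linf (Phi v))
  (Hl : islin Phi)
  (Hshift : forall v, linf v -> Phi (bshift v) = bshift (Phi v))
  (Hidem : forall v, linf v -> Phi (Phi v) = Phi v) (t : R) :
  0 < t < pi ->
  (zf Phi t = 0 \/ zf Phi t = 1) /\ Phi (Cs t) = (fun n => zf Phi t * Cs t n) /\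
     Phi (Ss t) = (fun n => zf Phi t * Ss t n).
Proof.
move=> /sin_gt0_pi st.
have [z [hz [h1 h2]]] := eig_trig Hmaps Hl Hshift Hidem (lt0r_neq0 st).
have -> : zf Phi t = z by rewrite /zf h1 Cs0 mulr1.
by [].
Qed.

Lemma z_near (R : realType) (Phi : (int -> R) -> (int -> R))
  (Hmaps : forall v, linf v -> linf (Phi v))
  (Hl : islin Phi)
  (Hshift : forall v, linf v -> Phi (bshift v) = bshift (Phi v))
  (Hcont : wstar_continuous Phi)
  (Hidem : forall v, linf v -> Phi (Phi v) = Phi v) (t0 : R) :
  0 < t0 < pi -> \forall t \near t0, zf Phi t = zf Phi t0.
Proof.
move=> t0i.
have e2 : (0 : R) < 1 / 2 by lra.
have M2 : (0 : R) <= 2 by lra.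
have [K [eta [eta0 HK]]] := CC2 Hmaps Hcont 0 (linf_Cs t0) e2 M2.
have [h0 _] := eig_z Hmaps Hl Hshift Hidem t0i.
have nk : forall k : nat, \forall t \near t0,
    `|Cs t k%:Z - Cs t0 k%:Z| <= eta /\
    `|Cs t (- (k.+1)%:Z) - Cs t0 (- (k.+1)%:Z)| <= eta.
  move=> k; near=> t; split; near: t; exact: (near_cos _ _ eta0).
have nb := near_all K nk.
near=> t.
have ti : 0 < t < pi by near: t; exact: near_itv.
have [h1 _] := eig_z Hmaps Hl Hshift Hidem ti.
have H : `|zf Phi t - zf Phi t0| < 1 / 2.
  apply: HK; first exact: linf_Cs.
  - move=> m; apply: le_trans (ler_normB _ _) _.
    have := cos_max (m%:~R * t); have := cos_max (m%:~R * t0); rewrite /Cs; lra.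
  - near: t; exact: nb.
move: H; rewrite ltr_norml.
by case: h1 => ->; case: h0 => -> //; lra.
Unshelve. all: by end_near.
Qed.

Lemma z_const (R : realType) (Phi : (int -> R) -> (int -> R))
  (Hmaps : forall v, linf v -> linf (Phi v))
  (Hl : islin Phi)
  (Hshift : forall v, linf v -> Phi (bshift v) = bshift (Phi v))
  (Hcont : wstar_continuous Phi)
  (Hidem : forall v, linf v -> Phi (Phi v) = Phi v) (a b : R) :
  0 < a < pi -> 0 < b < pi -> zf Phi a = zf Phi b.
Proof.
wlog ab : a b / a <= b.
  move=> H ha hb; case: (leP a b) => h; first exact: H.
  by symmetry; apply: H => //; exact: ltW.
move=> ai bi.
have cont : {within `[a, b], continuous (zf Phi)}.
  apply: continuous_in_subspaceT => x /set_mem /=; rewrite in_itv /= => /andP[xa xb].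
  have xi : 0 < x < pi by move: ai bi; lra.
  by apply: cvg_near_cst; exact: (z_near Hmaps Hl Hshift Hcont Hidem xi).
have [ha _] := eig_z Hmaps Hl Hshift Hidem ai.
have [hb _] := eig_z Hmaps Hl Hshift Hidem bi.
have H12 : zf Phi a != zf Phi b -> False.
  move=> ne.
  have [|c cin hc] := @IVT R (zf Phi) a b (1/2) ab cont.
    by move: ne; case: ha => ->; case: hb => -> //; rewrite ?eqxx // => _;
      rewrite ge_min le_max; apply/andP; split; apply/orP; (left + right); lra.
  move: cin; rewrite in_itv /= => /andP[ca cb].
  have ci : 0 < c < pi by move: ai bi; lra.
  have [hc' _] := eig_z Hmaps Hl Hshift Hidem ci.
  by move: hc'; rewrite hc; case; lra.
by apply/eqP; apply/negPn/negP.
Qed.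


Lemma trig_sum (R : realType) (x : R) N :
  2 * sin x * \sum_(j < N) cos ((2 * j%:R + 1) * x) = sin (2 * N%:R * x).
Proof.
elim: N => [|N IH]; first by rewrite big_ord0 mulr0 mulr0 mul0r sin0.
rewrite big_ord_recr /= mulrDr IH.
have -> : (N.+1)%:R = N%:R + 1 :> R by rewrite -addn1 natrD.
have e1 : 2 * (N%:R + 1) * x = (2 * N%:R + 1) * x + x by ring.
have e2 : 2 * N%:R * x = (2 * N%:R + 1) * x - x by ring.
rewrite e2 sinB e1 sinD; ring.
Qed.

Lemma sin_natpi (R : realType) (k : nat) : sin (k%:R * pi) = 0 :> R.
Proof.
elim: k => [|k IH]; first by rewrite mul0r sin0.
have -> : (k.+1)%:R = k%:R + 1 :> R by rewrite -addn1 natrD.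
by rewrite mulrDl mul1r sinDpi IH oppr0.
Qed.

Lemma sin_intpi (R : realType) (k : int) : sin (k%:~R * pi) = 0 :> R.
Proof.
case: k => k; first exact: sin_natpi.
by rewrite NegzE mulrNz mulNr sinN sin_natpi oppr0.
Qed.

Lemma sin_pos_frac (R : realType) (N : nat) (y : R) : (0 < N)%N ->
  0 < y < 2 * N%:R -> 0 < sin (y * pi / (2 * N%:R)).
Proof.
move=> N0 /andP[y0 y1].
have N0' : (0 : R) < N%:R by rewrite ltr0n.
have c0 : (0 : R) < 2 * N%:R by rewrite mulr_gt0.
apply: sin_gt0_pi.
have -> : y * pi / (2 * N%:R) = y / (2 * N%:R) * pi by ring.
have q0 : 0 < y / (2 * N%:R) by rewrite divr_gt0.
have q1 : y / (2 * N%:R) < 1 by rewrite ltr_pdivrMr // mul1r.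
have pg := @pi_gt0 R; apply/andP; split; nra.
Qed.

Lemma int_lt_R (R : realType) (a b : int) : (a < b)%R -> (a%:~R < b%:~R :> R).
Proof. by rewrite ltr_int. Qed.

Definition thj (R : realType) (N j : nat) : R := (2 * j%:R + 1) * (pi / (2 * N%:R)).
Definition Tm (R : realType) (N : nat) (m : int) : int -> R :=
  fun n => N%:R^-1 * \sum_(j < N) cos ((n - m)%:~R * thj R N j).

Lemma Tm_val (R : realType) N m n : (0 < N)%N ->
  (n - m < (2 * N)%:Z)%R -> (- (2 * N)%:Z < n - m)%R ->
  Tm R N m n = if n == m then 1 else 0.
Proof.
move=> N0 h1 h2.
have N0' : (N%:R : R) != 0 by rewrite pnatr_eq0 -lt0n.
rewrite /Tm; case: eqP => [->|nm].
  rewrite subrr (eq_bigr (fun _ => 1)); last by move=> j _; rewrite mul0r cos0.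
  by rewrite sumr_const card_ord -[_ *+ _]mulr_natl mulr1 mulVf.
set d := n - m.
have d0 : d != 0 by rewrite subr_eq0; apply/eqP.
set x := d%:~R * pi / (2 * N%:R) : R.
have rw : forall j, d%:~R * thj R N j = (2 * j%:R + 1) * x.
  by move=> j; rewrite /thj /x; ring.
rewrite (eq_bigr (fun j : 'I_N => cos ((2 * j%:R + 1) * x))); last by move=> j _; rewrite rw.
have sx : sin x != 0.
  have c2 : ((2 * N)%:Z%:~R : R) = 2 * N%:R.
    by rewrite -[LHS]/(((2 * N)%N)%:R : R) natrM.
  case: (ltrgt0P d) => hd.
  - apply: lt0r_neq0; apply: sin_pos_frac => //; apply/andP; split.
      by rewrite ltr0z.
    by rewrite -c2 ltr_int.
  - have : 0 < sin ((- d)%:~R * pi / (2 * N%:R)) :> R.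
      apply: sin_pos_frac => //; apply/andP; split.
        by rewrite ltr0z oppr_gt0.
      rewrite -c2 ltr_int; lia.
    rewrite mulrNz !mulNr sinN -/x oppr_gt0 => /ltr0_neq0 //.
  - by move: d0; rewrite hd eqxx.
have : 2 * sin x * \sum_(j < N) cos ((2 * j%:R + 1) * x) = 0.
  rewrite trig_sum.
  have -> : 2 * N%:R * x = d%:~R * pi by rewrite /x; field; rewrite N0'.
  exact: sin_intpi.
move/eqP; rewrite mulf_eq0 mulf_eq0 (negbTE sx) orbF => /orP[|/eqP->]; last by rewrite mulr0.
by rewrite pnatr_eq0.
Qed.


Definition eigP (R : realType) (Phi : (int -> R) -> (int -> R)) (s : R) (v : int -> R) :=
  linf v /\ Phi v = (fun n => s * v n).

Lemma eig_comb (R : realType) Phi s (c : R) v w : islin Phi ->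
  eigP Phi s v -> eigP Phi s w -> eigP Phi s (fun n => c * v n + w n).
Proof.
move=> Hl [lv ev] [lw ew]; split; first exact: linf_comb.
rewrite Hl // ev ew; apply/funext => n; ring.
Qed.

Lemma eig0 (R : realType) Phi (s : R) : islin Phi -> eigP Phi s (fun _ => 0).
Proof.
move=> Hl; split; first exact: linf0.
by rewrite Phi0 //; apply/funext => n; rewrite mulr0.
Qed.

Lemma eig_ext (R : realType) Phi (s : R) v w : v = w -> eigP Phi s v -> eigP Phi s w.
Proof. by move=> ->. Qed.

Lemma eig_sum (R : realType) Phi (s : R) N (f : nat -> int -> R) : islin Phi ->
  (forall j, (j < N)%N -> eigP Phi s (f j)) -> eigP Phi s (fun n => \sum_(j < N) f j n).
Proof.
move=> Hl; elim: N => [|N IH] Hf.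
  apply: eig_ext (eig0 s Hl); apply/funext => n; by rewrite big_ord0.
have IH' := IH (fun j jN => Hf j (ltnW jN)).
apply: eig_ext (eig_comb 1 Hl IH' (Hf N (ltnSn N))).
by apply/funext => n; rewrite big_ord_recr /= mul1r.
Qed.

Lemma Tm_bound (R : realType) N m n : (0 < N)%N -> `|Tm R N m n| <= 1.
Proof.
move=> N0; have N0' : (0 : R) < N%:R by rewrite ltr0n.
rewrite /Tm normrM (ger0_norm (_ : 0 <= N%:R^-1)); last by rewrite invr_ge0 ltW.
rewrite mulrC ler_pdivrMr // mul1r.
apply: le_trans (ler_norm_sum _ _ _) _.
apply: le_trans (_ : \sum_(j < N) (1 : R) <= _).
  by apply: ler_sum => j _; exact: cos_max.
by rewrite sumr_const card_ord -[_ *+ _]mulr_natl mulr1.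
Qed.

Lemma Tm_eig (R : realType) (Phi : (int -> R) -> (int -> R)) (s : R)
  (Hl : islin Phi)
  (Hcs : forall t, 0 < t < pi -> eigP Phi s (Cs t) /\ eigP Phi s (Ss t))
  N m : (0 < N)%N -> eigP Phi s (Tm R N m).
Proof.
move=> N0.
have thi : forall j : 'I_N, 0 < thj R N j < pi.
  move=> j; have N0' : (0 : R) < N%:R by rewrite ltr0n.
  have pg := @pi_gt0 R.
  have jN : (j%:R : R) + 1 <= N%:R by rewrite natr1 ler_nat.
  rewrite /thj.
  have -> : (2 * j%:R + 1) * (pi / (2 * N%:R)) = (2 * j%:R + 1) / (2 * N%:R) * pi :> R by ring.
  have q0 : 0 < (2 * (j%:R : R) + 1) / (2 * N%:R) by rewrite divr_gt0 // ?mulr_gt0 //; lra.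
  have q1 : (2 * (j%:R : R) + 1) / (2 * N%:R) < 1.
    by rewrite ltr_pdivrMr ?mulr_gt0 // mul1r; lra.
  apply/andP; split; nra.
pose f := fun (j : nat) (n : int) =>
  (N%:R^-1 * cos (m%:~R * thj R N j)) * Cs (thj R N j) n +
  ((N%:R^-1 * sin (m%:~R * thj R N j)) * Ss (thj R N j) n + 0).
have ef : Tm R N m = (fun n => \sum_(j < N) f j n).
  apply/funext => n; rewrite /Tm mulr_sumr; apply: eq_bigr => j _.
  by rewrite /f /Cs /Ss intrB mulrBl cosB; ring.
rewrite ef; apply: eig_sum => // j jN.
have [hc hs] := Hcs _ (thi (Ordinal jN)).
exact: (eig_comb _ Hl hc (eig_comb _ Hl hs (eig0 s Hl))).
Qed.


Lemma eq_eps (R : realType) (x y : R) :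
  (forall eps, 0 < eps -> `|x - y| < eps) -> x = y.
Proof.
move=> H; apply/eqP; apply/negPn/negP => ne.
have := H `|x - y|; rewrite normr_gt0 subr_eq0 ne ltxx; by move/(_ isT).
Qed.

Lemma linf_dlt (R : realType) m : linf (@dlt R m).
Proof. by exists 1 => n; rewrite /dlt; case: ifP; rewrite ?normr1 ?normr0 ?ler01. Qed.

Lemma dlt_norm (R : realType) m n : `|@dlt R m n| <= 1.
Proof. by rewrite /dlt; case: ifP; rewrite ?normr1 ?normr0 ?ler01. Qed.

Lemma dlt_eig (R : realType) (Phi : (int -> R) -> (int -> R)) (s : R)
  (Hmaps : forall v, linf v -> linf (Phi v))
  (Hl : islin Phi) (Hcont : wstar_continuous Phi)
  (Hcs : forall t, 0 < t < pi -> eigP Phi s (Cs t) /\ eigP Phi s (Ss t)) m :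
  eigP Phi s (dlt m).
Proof.
split; first exact: (linf_dlt R m).
apply/funext => n; apply: eq_eps => eps e0.
have M2 : (0 : R) <= 2 by lra.
have [K [eta [eta0 HK]]] := CC2 Hmaps Hcont n (linf_dlt R m) e0 M2.
pose N := (K + absz m + absz n).+1.
have N0 : (0 < N)%N by [].
have [eT1 eT2] := Tm_eig Hl Hcs m N0.
have H := HK (Tm R N m) eT1.
rewrite eT2 (@Tm_val R N m n) in H; try lia.
rewrite distrC; apply: H.
- move=> p; apply: le_trans (ler_normB _ _) _.
  have := Tm_bound R m p N0; have := dlt_norm R m p; lra.
- move=> k kK; rewrite !(@Tm_val R N m) //; try lia.
  by rewrite /dlt !subrr normr0 ltW.
Qed.

Definition Vt (R : realType) (v : int -> R) (K : nat) : int -> R :=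
  fun n => \sum_(k < K) (v k%:Z * dlt k%:Z n + (v (- (k.+1)%:Z) * dlt (- (k.+1)%:Z) n + 0)).

Lemma Vt_val (R : realType) (v : int -> R) K n :
  Vt v K n = if (idx n < K)%N then v n else 0.
Proof.
rewrite /Vt (eq_bigr (fun k : 'I_K => ptm v (dlt n) k)); last first.
  by move=> k _; rewrite /ptm /dlt addr0 ![_ == n]eq_sym.
rewrite (@sum_single R (ptm v (dlt n)) (idx n)).
  by case: ifP => //; rewrite ptm_dlt eqxx.
by move=> k /negbTE kn; rewrite ptm_dlt kn.
Qed.

Lemma Vt_eig (R : realType) (Phi : (int -> R) -> (int -> R)) (s : R)
  (Hl : islin Phi) (Hd : forall m, eigP Phi s (dlt m)) v K :
  eigP Phi s (Vt v K).
Proof.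
apply: (@eig_sum R Phi s K (fun (k : nat) n => v k%:Z * dlt k%:Z n +
   (v (- (k.+1)%:Z) * dlt (- (k.+1)%:Z) n + 0))) => // k _.
exact: (eig_comb _ Hl (Hd _) (eig_comb _ Hl (Hd _) (eig0 s Hl))).
Qed.

Lemma all_eig (R : realType) (Phi : (int -> R) -> (int -> R)) (s : R)
  (Hmaps : forall v, linf v -> linf (Phi v))
  (Hl : islin Phi) (Hcont : wstar_continuous Phi)
  (Hd : forall m, eigP Phi s (dlt m)) v :
  linf v -> Phi v = (fun n => s * v n).
Proof.
move=> lv; apply/funext => n; apply: eq_eps => eps e0.
have [B HB] := lv.
have B0 : 0 <= B by apply: le_trans (HB 0).
have [K [eta [eta0 HK]]] := CC2 Hmaps Hcont n lv e0 B0.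
pose K' := (K + (idx n).+1)%N.
have [eT1 eT2] := Vt_eig Hl Hd v K'.
have H := HK (Vt v K') eT1.
rewrite eT2 Vt_val in H.
have hK : (idx n < K')%N by rewrite /K'; lia.
rewrite hK in H; rewrite distrC; apply: H.
- move=> p; rewrite Vt_val; case: ifP => _.
    by rewrite subrr normr0.
  by rewrite sub0r normrN.
- move=> k kK; rewrite !Vt_val.
  have -> : (idx k%:Z < K')%N by rewrite /K' /=; lia.
  by rewrite !subrr normr0 ltW.
Qed.


Theorem proposition2p2 (R : realType) (Phi : (int -> R) -> (int -> R))
  (Hmaps : forall v, linf v -> linf (Phi v))
  (Hlin : forall (c : R) v w, linf v -> linf w ->
     Phi (fun n => c * v n + w n) = (fun n => c * Phi v n + Phi w n))
  (Hshift : forall v, linf v -> Phi (bshift v) = bshift (Phi v))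
  (Hcont : wstar_continuous Phi)
  (Hidem : forall v, linf v -> Phi (Phi v) = Phi v) :
  (forall v, linf v -> Phi v = v) \/ (forall v, linf v -> Phi v = (fun _ => 0)).
Proof.
have Hl : islin Phi := Hlin.
pose s := zf Phi (pi / 2).
have pg := @pi_gt0 R.
have hi1 : 0 < (pi : R) / 2 by lra.
have hi2 : (pi : R) / 2 < pi by lra.
have hi : (0 : R) < (pi : R) / 2 < (pi : R) by rewrite hi1 hi2.
have Hcs : forall t, 0 < t < pi -> eigP Phi s (Cs t) /\ eigP Phi s (Ss t).
  move=> t ti; have [_ [h1 h2]] := eig_z Hmaps Hl Hshift Hidem ti.
  have e := z_const Hmaps Hl Hshift Hcont Hidem ti hi.
  rewrite /s -e; split; split => //; [exact: linf_Cs | exact: linf_Ss].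
have Hd := dlt_eig Hmaps Hl Hcont Hcs.
have Hall := all_eig Hmaps Hl Hcont Hd.
have [hs _] := eig_z Hmaps Hl Hshift Hidem hi.
case: hs => hs; [right | left] => v lv; rewrite (Hall v lv) /s hs;
  apply/funext => n; by rewrite ?mul0r ?mul1r.
Qed.
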